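(* Let $D=\{(x_1,y_1),\dots,(x_N,y_N)\}$ be a training set with $N$ samples, fix a target index $i\in\{1,\dots,N\}$, and fix a sampling size $z$ with $1\le z< N$. Let $q_\theta(y\mid x,\tilde D)\in[0,1]$ be a fixed predictor satisfying the Fitting Assumption below. Let $w_1=(p^{w_1}_1,\dots,p^{w_1}_N)$ be uniform sampling weights, $p^{w_1}_a=p_0=\frac1N$ for all $a$. For a real number $k$ with $1<k<N$, let $\lambda=\frac{1-kp_0}{1-p_0}=\frac{N-k}{N-1}$ and define new weights $w_2$ by $p^{w_2}_i=k p_0$ and $p^{w_2}_j=\lambda p_0$ for all $j\neq i$ (so $w_2$ is normalized). Define $$\lambda_B=\lambda^z\,\frac{\prod_{a=1}^{z}\bigl(1-(a-1)p_0\bigr)}{\prod_{a=1}^{z}\bigl(1-(a-1)\lambda p_0\bigr)},$$ which satisfies $0<\lambda_B<1$. If $k>(N-z)(1-\lambda_B)+1$, then $$\mathbb{E}\bigl[q_{(\theta,w_2)}(y_i\mid x_i,D)\bigr]>\mathbb{E}\bigl[q_{(\theta,w_1)}(y_i\mid x_i,D)\bigr].$$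
   Context: Fitting Assumption: for every sample $(x_i,y_i)\in D$, every training set $\tilde D$ (a collection of labeled samples), and every other sample $(x_j,y_j)\in D$, $$q_\theta\bigl(y_i\mid x_i,\tilde D\cup\{(x_i,y_i)\}\bigr)>\max\Bigl[q_\theta(y_i\mid x_i,\tilde D),\;q_\theta\bigl(y_i\mid x_i,\tilde D\cup\{(x_j,y_j)\}\bigr)\Bigr].$$ Weighted non-replacement sampling: given normalized weights $w=(p_1,\dots,p_N)$ on the samples of $D$, a subset $D^z_w\subseteq D$ of size $z$ is drawn by selecting $z$ distinct samples sequentially, where at each step a not-yet-selected sample $a$ is chosen with probability $p_a/(1-\sum_{b\text{ already selected}}p_b)$. The sampled PFN predictor is $q_{(\theta,w)}(y\mid x,D)=q_\theta(y\mid x,D^z_w)$, and the expectation $\mathbb{E}[q_{(\theta,w)}(y_i\mid x_i,D)]=\sum_{S}\Pr(D^z_w=S)\,q_\theta(y_i\mid x_i,S)$ is over the random subset $D^z_w$. *)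

(* Defs.v *)
From HB Require Import structures.
From mathcomp Require Import all_boot all_order all_algebra.
Set Implicit Arguments. Unset Strict Implicit. Unset Printing Implicit Defensive.
Import Order.TTheory GRing.Theory Num.Theory.
Local Open Scope ring_scope.

(* Samples of D are indexed by 'I_N; a training set drawn from D is a
   subset S : {set 'I_N}.  A predictor is q : 'I_N -> {set 'I_N} -> R with
   q j S = q_theta(y_j | x_j, {(x_a,y_a) | a in S}). *)

(* Fitting Assumption (restricted to training sets not already containing
   the sample i). *)
Definition fitting_assumption (R : realFieldType) (N : nat)
  (q : 'I_N -> {set 'I_N} -> R) : Prop :=
  forall (i : 'I_N) (S : {set 'I_N}) (j : 'I_N),
    i \notin S -> j != i ->
    Num.max (q i S) (q i (j |: S)) < q i (i |: S).

(* Probability of drawing the ordered sequence s sequentially without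
   replacement with weights w; acc is the total weight already selected. *)
Fixpoint seq_prob_aux (R : realFieldType) (N : nat) (w : 'I_N -> R)
  (acc : R) (s : seq 'I_N) : R :=
  match s with
  | [::] => 1
  | a :: s' => (w a / (1 - acc)) * seq_prob_aux w (acc + w a) s'
  end.

Definition seq_prob (R : realFieldType) (N : nat) (w : 'I_N -> R)
  (s : seq 'I_N) : R := seq_prob_aux w 0 s.

(* Pr(D^z_w = S): sum over all orderings of z distinct samples whose set is S. *)
Definition subset_prob (R : realFieldType) (N : nat) (w : 'I_N -> R)
  (z : nat) (S : {set 'I_N}) : R :=
  \sum_(t : z.-tuple 'I_N | uniq t && ([set a in t] == S)) seq_prob w t.

Definition sampled_expectation (R : realFieldType) (N : nat)
  (q : 'I_N -> {set 'I_N} -> R) (w : 'I_N -> R) (z : nat) (i : 'I_N) : R :=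
  \sum_(S : {set 'I_N}) subset_prob w z S * q i S.

Definition uniform_weights (R : realFieldType) (N : nat) : 'I_N -> R :=
  fun _ => 1 / N%:R.

Definition lambda_of (R : realFieldType) (N : nat) (k : R) : R :=
  (1 - k * (1 / N%:R)) / (1 - 1 / N%:R).

Definition reweighted (R : realFieldType) (N : nat) (i : 'I_N) (k : R)
  : 'I_N -> R :=
  fun a => if a == i then k * (1 / N%:R) else lambda_of N k * (1 / N%:R).

Definition lambda_B (R : realFieldType) (N : nat) (k : R) (z : nat) : R :=
  let p0 := 1 / N%:R in
  let lam := lambda_of N k in
  lam ^+ z * (\prod_(a < z) (1 - a%:R * p0))
           / (\prod_(a < z) (1 - a%:R * lam * p0)).

(* Main.v *)
Require Import Defs.
From mathcomp Require Import all_boot all_order all_algebra fingroup perm.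
From mathcomp Require Import ring lra.
Import Order.TTheory GRing.Theory Num.Theory.
Local Open Scope ring_scope.
Set Implicit Arguments. Unset Strict Implicit.

Lemma big_tuple_cons (R : nmodType) (T : finType) n (F : (n.+1).-tuple T -> R) :
  \sum_t F t = \sum_a \sum_(t : n.-tuple T) F [tuple of a :: t].
Proof.
rewrite (reindex (fun p : T * n.-tuple T => [tuple of p.1 :: p.2])) /=.
  by rewrite pair_big.
exists (fun t => (thead t, [tuple of behead t])).
  by move=> [a t] _ /=; congr pair; apply: val_inj.
by move=> t _; rewrite [in RHS](tuple_eta t).
Qed.

Fixpoint P (R : fieldType) (acc : R) (s : seq R) : R :=
  match s with [::] => 1 | x :: s' => (x / (1 - acc)) * P (acc + x) s' end.

Lemma seq_prob_auxE (R : realFieldType) N (w : 'I_N -> R) acc s :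
  seq_prob_aux w acc s = P acc (map w s).
Proof. by elim: s acc => //= a s IH acc; rewrite IH. Qed.

Lemma all_notin_U1 N (a : 'I_N) (X : {set 'I_N}) (s : seq 'I_N) :
  (all (fun x => x \notin a |: X) s) = (a \notin s) && all (fun x => x \notin X) s.
Proof.
elim: s => //= b s ->; rewrite in_setU1 negb_or (eq_sym b a) inE.
by case: (a == b) (a \in s) (b \in X) => [] [] [].
Qed.

Lemma total_prob (R : realFieldType) N (w : 'I_N -> R) :
  (forall a, 0 < w a) -> \sum_a w a = 1 ->
  forall n (X : {set 'I_N}), (n <= #|~: X|)%N ->
  \sum_(t : n.-tuple 'I_N | uniq t && all (fun a => a \notin X) t)
     seq_prob_aux w (\sum_(a in X) w a) t = 1.
Proof.
move=> wpos wsum; elim=> [|n IH] X hn.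
  rewrite (big_pred1 [tuple]) //= => t; rewrite tuple0 /=; by apply/esym/eqP.
rewrite big_mkcond big_tuple_cons /=.
have tot : \sum_(a in ~: X) w a = 1 - \sum_(a in X) w a.
  have e : \sum_a w a = \sum_(a in X) w a + \sum_(a in ~: X) w a.
    by rewrite (bigID (mem X)) /=; congr (_+_); apply: eq_bigl => x; rewrite in_setC.
  by rewrite -wsum e [X in X - _]addrC addrK.
have hpos : 0 < \sum_(a in ~: X) w a.
  have /card_gt0P [a0 a0X] : (0 < #|~: X|)%N by apply: leq_trans hn.
  rewrite (bigD1 a0) //=; apply: ltr_pwDl => //.
  by apply: sumr_ge0 => x _; apply: ltW.
transitivity ((\sum_(a in ~: X) w a) / (1 - \sum_(a in X) w a)); last first.
  by rewrite tot divff // -tot gt_eqF.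
rewrite mulr_suml [RHS]big_mkcond /=; apply: eq_bigr => a _.
rewrite in_setC; case: (boolP (a \in X)) => aX /=.
  by rewrite big1 // => t _; rewrite andbF.
have -> : (\sum_(x in X) w x + w a) = \sum_(x in a |: X) w x.
  by rewrite big_setU1 //= addrC.
have hc : (n <= #|~: (a |: X)|)%N.
  have -> : ~: (a |: X) = ~: X :\ a by apply/setP=> x; rewrite !inE negb_or andbC.
  by move: hn; rewrite (cardsD1 a (~: X)) in_setC aX.
transitivity (w a / (1 - \sum_(a in X) w a) * \sum_(t : n.-tuple 'I_N | uniq t && all (fun x => x \notin a |: X) t)
     seq_prob_aux w (\sum_(x in a |: X) w x) t); last by rewrite IH // mulr1.
rewrite mulr_sumr [RHS]big_mkcond /=; apply: eq_bigr => t _.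
rewrite all_notin_U1.
by case: (a \notin t); case: (uniq t); case: (all _ t); rewrite /= ?mulr0.
Qed.

Lemma S1 (R : realFieldType) N (q : 'I_N -> {set 'I_N} -> R) (w : 'I_N -> R) z i :
  sampled_expectation q w z i =
  \sum_(t : z.-tuple 'I_N | uniq t) seq_prob w t * q i [set x in t].
Proof.
rewrite /sampled_expectation /subset_prob.
under eq_bigr do rewrite mulr_suml big_mkcond.
rewrite exchange_big [RHS]big_mkcond /=; apply: eq_bigr => t _.
case: (uniq t) => /=; last by rewrite big1.
rewrite (bigD1 [set x in t]) //= eqxx big1 ?addr0 // => S hS.
by rewrite eq_sym (negbTE hS).
Qed.

Lemma S2 (R : realFieldType) N z (i : 'I_N) (F : z.-tuple 'I_N -> R) :
  \sum_(t : z.-tuple 'I_N | uniq t) F t =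
  \sum_(t : z.-tuple _ | uniq t && (i \notin t)) F t +
  \sum_(m < z) \sum_(t : z.-tuple _ | uniq t && (tnth t m == i)) F t.
Proof.
under [X in _ = _ + X]eq_bigr do rewrite big_mkcond.
rewrite exchange_big big_mkcond [X in _ = X + _]big_mkcond -big_split /=.
apply: eq_bigr => t _.
case ut: (uniq t) => /=; last by rewrite big1 ?addr0.
case: (boolP (i \in t)) => it /=.
  have [m0 hm0] := tnthP _ _ it.
  rewrite add0r (bigD1 m0) //= -hm0 eqxx big1 ?addr0 // => m hm.
  case: eqP => // e; move: hm; rewrite hm0 in e; rewrite (tuple_uniqP _ ut _ _ e) eqxx //.
rewrite big1 ?addr0 // => m _; case: eqP => // e.
by move: it; rewrite -e mem_tnth.
Qed.

Definition swp N n (m : 'I_n.+1) (t : n.+1.-tuple 'I_N) : n.+1.-tuple 'I_N :=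
  [tuple tnth t (tperm ord0 m j) | j < n.+1].

Lemma swpK N n m : involutive (@swp N n m).
Proof. by move=> t; apply: eq_from_tnth => j; rewrite !tnth_mktuple tpermK. Qed.

Lemma swp_sub N n m (t : n.+1.-tuple 'I_N) x : x \in swp m t -> x \in t.
Proof. by case/tnthP => j ->; rewrite tnth_mktuple mem_tnth. Qed.

Lemma swp_set N n m (t : n.+1.-tuple 'I_N) : [set x in swp m t] = [set x in t].
Proof.
apply/setP => x; rewrite !inE; apply/idP/idP; first exact: swp_sub.
by rewrite -{1}(swpK m t); apply: swp_sub.
Qed.

Lemma swp_uniq1 N n m (t : n.+1.-tuple 'I_N) : uniq t -> uniq (swp m t).
Proof.
move=> /tuple_uniqP ut; apply/tuple_uniqP => j1 j2.
by rewrite !tnth_mktuple => /ut /perm_inj.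
Qed.

Lemma swp_uniq N n m (t : n.+1.-tuple 'I_N) : uniq (swp m t) = uniq t.
Proof.
apply/idP/idP; last exact: swp_uniq1.
by rewrite -{2}(swpK m t); apply: swp_uniq1.
Qed.

Lemma symm (R : realFieldType) N n (i : 'I_N) (g : {set 'I_N} -> R) m :
  \sum_(t : n.+1.-tuple 'I_N | uniq t && (tnth t m == i)) g [set x in t] =
  \sum_(t : n.+1.-tuple 'I_N | uniq t && (tnth t ord0 == i)) g [set x in t].
Proof.
rewrite [RHS](reindex_inj (can_inj (swpK m))) /=.
apply: eq_big => t; first by rewrite swp_uniq tnth_mktuple tpermL.
by rewrite swp_set.
Qed.

Lemma decomp (R : realFieldType) N n (i : 'I_N) (w : 'I_N -> R) (al : R)
  (be : 'I_n.+1 -> R) (g : {set 'I_N} -> R) :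
 (forall t : n.+1.-tuple 'I_N, uniq t -> i \notin t -> seq_prob w t = al) ->
 (forall (t : n.+1.-tuple 'I_N) m, uniq t -> tnth t m = i -> seq_prob w t = be m) ->
 \sum_(t : n.+1.-tuple 'I_N | uniq t) seq_prob w t * g [set x in t] =
 al * \sum_(t : n.+1.-tuple 'I_N | uniq t && (i \notin t)) g [set x in t] +
 \sum_m be m * \sum_(t : n.+1.-tuple 'I_N | uniq t && (tnth t ord0 == i)) g [set x in t].
Proof.
move=> hA hB; rewrite (S2 i) mulr_sumr; congr (_ + _).
  by apply: eq_bigr => t /andP [ut it]; rewrite hA.
apply: eq_bigr => m _; rewrite -(symm i g m) mulr_sumr.
by apply: eq_bigr => t /andP [ut /eqP e]; rewrite (hB t m).
Qed.

Lemma fiberA (R : realFieldType) N n (i : 'I_N) (G : n.-tuple 'I_N -> R) :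
  (n.+1 <= N)%N ->
  \sum_(t : n.+1.-tuple 'I_N | uniq t && (i \notin t)) G [tuple of behead t] =
  (N - n.+1)%:R * \sum_(t : n.-tuple 'I_N | uniq t && (i \notin t)) G t.
Proof.
move=> hN.
rewrite big_mkcond big_tuple_cons /= exchange_big mulr_sumr [RHS]big_mkcond /=.
apply: eq_bigr => t _.
case ut: (uniq t); case it: (i \in t); rewrite /=.
- by rewrite big1 // => a _; rewrite inE it orbT !andbF.
- transitivity (\sum_(a in [predC (i :: t)]) G t).
    rewrite [RHS]big_mkcond; apply: eq_bigr => a _.
    rewrite !inE it andbT orbF (eq_sym i a).
    set u := (X in (if _ then G X else 0) = _); have -> : u = t by apply: val_inj.
    by case: (a \in t); case: (a == i).
  rewrite sumr_const mulr_natl; congr (_ *+ _).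
  have := cardC (mem (i :: t)); rewrite card_ord.
  have -> : #|mem (i :: t)| = n.+1.
    by rewrite (elimT card_uniqP) /= ?size_tuple // it ut.
  by move/(f_equal (subn^~ n.+1)); rewrite addKn => ->.
- by rewrite big1 // => a _; rewrite !andbF.
- by rewrite big1 // => a _; rewrite !andbF.
Qed.

Lemma fiberB (R : realFieldType) N n (i : 'I_N) (G : n.-tuple 'I_N -> R) :
  \sum_(t : n.+1.-tuple 'I_N | uniq t && (tnth t ord0 == i)) G [tuple of behead t] =
  \sum_(t : n.-tuple 'I_N | uniq t && (i \notin t)) G t.
Proof.
rewrite big_mkcond big_tuple_cons /= (bigD1 i) //=.
rewrite [X in _ + X]big1 ?addr0; last first.
  move=> a ha; apply: big1 => t _.
  by rewrite (tnth_nth i) /= (negbTE ha) andbF.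
rewrite [RHS]big_mkcond; apply: eq_bigr => t _.
rewrite (tnth_nth i) /= eqxx andbT andbC.
set u := (X in (if _ then G X else 0) = _); have -> : u = t by apply: val_inj.
by [].
Qed.

Lemma fac_le (R : realFieldType) (a x y : R) :
  0 <= a -> 0 < y -> y <= x -> a * x < 1 -> y / (1 - a * y) <= x / (1 - a * x).
Proof.
move=> a0 y0 yx ax.
have ay : a * y <= a * x by rewrite ler_wpM2l.
have p1 : 0 < 1 - a * x by rewrite subr_gt0.
have p2 : 0 < 1 - a * y by rewrite subr_gt0; apply: le_lt_trans ax.
apply: (@le_trans _ _ (x / (1 - a * y))); first by rewrite ler_pM2r ?invr_gt0.
rewrite ler_pM2l ?(lt_le_trans y0) // lef_pV2 ?posrE //.
by rewrite lerD2l lerN2.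
Qed.

Lemma fac_lt (R : realFieldType) (a x y : R) :
  0 <= a -> 0 < y -> y < x -> a * x < 1 -> y / (1 - a * y) < x / (1 - a * x).
Proof.
move=> a0 y0 yx ax.
have ay : a * y <= a * x by rewrite ler_wpM2l // ltW.
have p1 : 0 < 1 - a * x by rewrite subr_gt0.
have p2 : 0 < 1 - a * y by rewrite subr_gt0; apply: le_lt_trans ax.
apply: (@lt_le_trans _ _ (x / (1 - a * y))); first by rewrite ltr_pM2r ?invr_gt0.
rewrite ler_pM2l ?(lt_trans y0) // lef_pV2 ?posrE //.
by rewrite lerD2l lerN2.
Qed.

Lemma natS_mul (R : realFieldType) (c : nat) (x : R) : c%:R * x + x = c.+1%:R * x.
Proof. by rewrite -addn1 natrD mulrDl mul1r. Qed.

Lemma P_pos (R : realFieldType) (x : R) m : forall c : nat,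
  0 < x -> (c + m)%:R * x <= 1 -> 0 < P (c%:R * x) (nseq m x).
Proof.
elim: m => [|m IH] c x0 h /=; first exact: ltr01.
rewrite natS_mul; apply: mulr_gt0; last by apply: IH; rewrite // addSnnS.
rewrite divr_gt0 // subr_gt0; apply: lt_le_trans h.
by rewrite ltr_pM2r // ltr_nat addnS ltnS leq_addr.
Qed.

Lemma P_le (R : realFieldType) (x y : R) m : forall c : nat,
  0 < y -> y <= x -> (c + m)%:R * x <= 1 ->
  P (c%:R * y) (nseq m y) <= P (c%:R * x) (nseq m x).
Proof.
elim: m => [|m IH] c y0 yx h /=; first by [].
have cx : c%:R * x < 1.
  apply: lt_le_trans h.
  by rewrite ltr_pM2r ?(lt_le_trans y0) // ltr_nat addnS ltnS leq_addr.
rewrite !natS_mul; apply: ler_pM.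
- by apply: ltW; rewrite divr_gt0 // subr_gt0; apply: le_lt_trans cx; rewrite ler_wpM2l.
- by apply: ltW; apply: P_pos; rewrite // addSnnS; apply: le_trans h; rewrite ler_wpM2l.
- exact: fac_le.
- by apply: IH; rewrite // addSnnS.
Qed.

Lemma P_lt (R : realFieldType) (x y : R) m (c : nat) :
  0 < y -> y < x -> (c + m.+1)%:R * x <= 1 ->
  P (c%:R * y) (nseq m.+1 y) < P (c%:R * x) (nseq m.+1 x).
Proof.
move=> y0 yx h /=.
have x0 : 0 < x by apply: lt_trans yx.
have cx : c%:R * x < 1.
  apply: lt_le_trans h.
  by rewrite ltr_pM2r // ltr_nat addnS ltnS leq_addr.
rewrite !natS_mul.
have hy : 0 < P (c.+1%:R * y) (nseq m y).
  by apply: P_pos; rewrite // addSnnS; apply: le_trans h; rewrite ler_wpM2l // ltW.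
apply: (@lt_le_trans _ _ (x / (1 - c%:R * x) * P (c.+1%:R * y) (nseq m y))).
  by rewrite ltr_pM2r //; apply: fac_lt.
rewrite ler_pM2l; last by rewrite divr_gt0 // subr_gt0.
apply: P_le => //; [exact: ltW | by rewrite addSnnS].
Qed.

Lemma map_cst (T : Type) (R : Type) (c : R) (s : seq T) : map (fun _ => c) s = nseq (size s) c.
Proof. by elim: s => //= a s ->. Qed.

Lemma W1 (R : realFieldType) N z (t : z.-tuple 'I_N) :
  seq_prob (@uniform_weights R N) t = P 0 (nseq z (1 / N%:R)).
Proof. by rewrite /seq_prob seq_prob_auxE /uniform_weights map_cst size_tuple. Qed.

Lemma W2A (R : realFieldType) N z (i : 'I_N) (k : R) (t : z.-tuple 'I_N) :
  i \notin t -> seq_prob (reweighted i k) t = P 0 (nseq z (lambda_of N k * (1 / N%:R))).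
Proof.
move=> it; rewrite /seq_prob seq_prob_auxE.
have -> : map (reweighted i k) t = map (fun _ => lambda_of N k * (1 / N%:R)) t.
  apply/eq_in_map => a ha.
  by rewrite /reweighted; case: eqP => // e; move: it; rewrite -e ha.
by rewrite map_cst size_tuple.
Qed.

Lemma W2B (R : realFieldType) N z (i : 'I_N) (k : R) (t : z.-tuple 'I_N) m :
  uniq t -> tnth t m = i -> seq_prob (reweighted i k) t =
  P 0 (map (fun j : 'I_z => if j == m then k * (1 / N%:R) else lambda_of N k * (1 / N%:R)) (enum 'I_z)).
Proof.
move=> /tuple_uniqP ut e; rewrite /seq_prob seq_prob_auxE -map_tnth_enum -map_comp.
congr (P 0 _); apply: eq_map => j /=; rewrite /reweighted -e.
by case: eqP => [/ut -> | ne]; rewrite ?eqxx //; case: eqP => // ej; case: ne; rewrite ej.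
Qed.

Lemma tot (R : realFieldType) N (w : 'I_N -> R) m :
  (forall a, 0 < w a) -> \sum_a w a = 1 -> (m <= N)%N ->
  \sum_(t : m.-tuple 'I_N | uniq t) seq_prob w t = 1.
Proof.
move=> wp ws hm.
have := total_prob wp ws (X := set0) (n := m); rewrite big_set0.
rewrite setC0 cardsT card_ord => /(_ hm) <-.
apply: eq_bigl => t; have -> : all (fun a => a \notin set0) t by apply/allP => a _; rewrite inE.
by rewrite andbT.
Qed.

Lemma strict_step (R : realFieldType) N (q : 'I_N -> {set 'I_N} -> R) n (i : 'I_N)
  (t : n.+1.-tuple 'I_N) : fitting_assumption q -> i \notin t ->
  q i [set x in t] < q i [set x in i :: behead t].
Proof.
move=> fit it; rewrite {1}(tuple_eta t) /= !set_cons.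
have h1 : i \notin [set x in behead t].
  by rewrite inE; apply: contra it; rewrite {2}(tuple_eta t) inE => ->; rewrite orbT.
have h2 : thead t != i.
  by apply: contra it => /eqP <-; rewrite {2}(tuple_eta t) inE eqxx.
have := fit i _ _ h1 h2; rewrite gt_max => /andP [_ ->] //.
Qed.

Unset Implicit Arguments.

Theorem lemma1 (R : realFieldType) (N : nat) (q : 'I_N -> {set 'I_N} -> R)
  (i : 'I_N) (z : nat) (k : R) :
  (1 <= z)%N -> (z < N)%N ->
  (forall j S, 0 <= q j S <= 1) ->
  fitting_assumption q ->
  1 < k -> k < N%:R ->
  k > (N - z)%N%:R * (1 - lambda_B N k z) + 1 ->
  sampled_expectation q (reweighted i k) z i >
  sampled_expectation q (@uniform_weights R N) z i.
Proof.
case: z => [//|n] _ hzN _ fit k1 kN _.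
set Nr : R := N%:R.
have N1 : (1 < N)%N by apply: leq_ltn_trans hzN.
have Nr1 : 1 < Nr by rewrite /Nr ltr1n.
have Nr0 : 0 < Nr by apply: lt_trans Nr1.
set p0 : R := 1 / Nr.
have p0pos : 0 < p0 by rewrite divr_gt0.
set lam := lambda_of N k.
have hlam : lam = (1 - k * p0) / (1 - p0) by [].
have p01 : 0 < 1 - p0.
  by rewrite subr_gt0 /p0 ltr_pdivrMr // mul1r.
have kp01 : 0 < 1 - k * p0.
  by rewrite subr_gt0 /p0 mulrA mulr1 ltr_pdivrMr // mul1r.
have lam0 : 0 < lam by rewrite hlam divr_gt0.
have lam1 : lam < 1.
  rewrite hlam ltr_pdivrMr // mul1r ltrD2l ltrN2.
  by rewrite -[X in X < _]mul1r ltr_pM2r.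
set y := lam * p0.
have y0 : 0 < y by apply: mulr_gt0.
have yp0 : y < p0 by rewrite /y -[X in _ < X]mul1r ltr_pM2r.
have w1p : forall a, 0 < @uniform_weights R N a by move=> a; exact: p0pos.
have w1s : \sum_a @uniform_weights R N a = 1.
  rewrite /uniform_weights sumr_const card_ord -[_ *+ N]mulr_natl -/Nr mul1r divff //.
  exact: lt0r_neq0.
have w2p : forall a, 0 < reweighted i k a.
  move=> a; rewrite /reweighted; case: eqP => _ //.
  by apply: mulr_gt0 => //; apply: lt_trans k1.
have w2s : \sum_a reweighted i k a = 1.
  rewrite (bigD1 i) //= {1}/reweighted eqxx.
  rewrite (eq_bigr (fun _ => y)); last by move=> a /negbTE ha; rewrite /reweighted ha.
  rewrite (eq_bigl (mem (predC1 i))) // sumr_const cardC1 card_ord.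
  have -> : y *+ N.-1 = (Nr - 1) * y.
    rewrite -mulr_natl /Nr; congr (_ * _).
    by rewrite -[in RHS](prednK (ltnW N1)) -addn1 natrD addrK.
  rewrite /y hlam /p0; field.
  apply/andP; split; first exact: lt0r_neq0.
  by rewrite subr_eq0 gt_eqF.
set SA := \sum_(t : n.+1.-tuple 'I_N | uniq t && (i \notin t)) q i [set x in t].
set SB := \sum_(t : n.+1.-tuple 'I_N | uniq t && (tnth t ord0 == i)) q i [set x in t].
set a1 := \sum_(t : n.+1.-tuple 'I_N | uniq t && (i \notin t)) (1 : R).
set b1 := \sum_(t : n.+1.-tuple 'I_N | uniq t && (tnth t ord0 == i)) (1 : R).
set Phi := \sum_(t : n.+1.-tuple 'I_N | uniq t && (i \notin t)) q i [set x in i :: behead t].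
set M : R := (N - n.+1)%:R.
have M0 : 0 < M by rewrite /M ltr0n subn_gt0.
have hSB : SB = \sum_(t : n.-tuple 'I_N | uniq t && (i \notin t)) q i [set x in i :: t].
  rewrite -(fiberB i (fun t => q i [set x in i :: t])); apply: eq_bigr => t /andP [_ /eqP e].
  congr (q i _); rewrite {1}(tuple_eta t) /= !set_cons.
  by rewrite -e.
have hb1 : b1 = \sum_(t : n.-tuple 'I_N | uniq t && (i \notin t)) (1 : R).
  by rewrite -(fiberB i (fun t => (1 : R))).
have hPhi : Phi = M * SB.
  by rewrite hSB -(fiberA i (fun t => q i [set x in i :: t]) (ltnW hzN)).
have ha1 : a1 = M * b1.
  by rewrite hb1 -(fiberA i (fun t => (1 : R)) (ltnW hzN)).
set u := P 0 (nseq n.+1 p0).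
set v := P 0 (nseq n.+1 y).
set f := fun m : 'I_n.+1 => P 0 (map (fun j : 'I_n.+1 => if j == m then k * (1 / N%:R) else lambda_of N k * (1 / N%:R)) (enum 'I_n.+1)).
have h1A : forall t : n.+1.-tuple 'I_N, uniq t -> i \notin t -> seq_prob (@uniform_weights R N) t = u.
  by move=> t _ _; rewrite W1.
have h1B : forall (t : n.+1.-tuple 'I_N) m, uniq t -> tnth t m = i -> seq_prob (@uniform_weights R N) t = (fun _ => u) m.
  by move=> t m _ _; rewrite W1.
have h2A : forall t : n.+1.-tuple 'I_N, uniq t -> i \notin t -> seq_prob (reweighted i k) t = v.
  by move=> t _ it; rewrite W2A.
have h2B : forall (t : n.+1.-tuple 'I_N) m, uniq t -> tnth t m = i -> seq_prob (reweighted i k) t = f m.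
  by move=> t m ut e; rewrite (W2B k ut e).
have E1 := @decomp R N n i _ _ _ (q i) h1A h1B.
have E2 := @decomp R N n i _ _ _ (q i) h2A h2B.
have T1 := @decomp R N n i _ _ _ (fun _ => 1) h1A h1B.
have T2 := @decomp R N n i _ _ _ (fun _ => 1) h2A h2B.
have T1' : 1 = u * a1 + \sum_(m < n.+1) u * b1.
  rewrite -[LHS](tot w1p w1s (ltnW hzN)) -T1; apply: eq_bigr => t _; by rewrite mulr1.
have T2' : 1 = v * a1 + \sum_(m < n.+1) f m * b1.
  rewrite -[LHS](tot w2p w2s (ltnW hzN)) -T2; apply: eq_bigr => t _; by rewrite mulr1.
clear T1 T2.
rewrite !S1 E1 E2 -/SA -/SB.
have e1 : \sum_(m < n.+1) u * SB = n.+1%:R * u * SB by rewrite sumr_const card_ord -mulrA mulr_natl.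
have e2 : \sum_(m < n.+1) u * b1 = n.+1%:R * u * b1 by rewrite sumr_const card_ord -mulrA mulr_natl.
set F := \sum_(m < n.+1) f m.
have e3 : \sum_(m < n.+1) f m * SB = F * SB by rewrite mulr_suml.
have e4 : \sum_(m < n.+1) f m * b1 = F * b1 by rewrite mulr_suml.
rewrite e1 e3; rewrite e2 in T1'; rewrite e4 in T2'.
have b1ge : 0 <= b1 by apply: sumr_ge0 => *; exact: ler01.
have b1pos : 0 < b1.
  rewrite lt0r b1ge andbT; apply/negP => /eqP b0; move: T1'.
  by rewrite ha1 b0 !mulr0 addr0 => /eqP; rewrite oner_eq0.
have hlt : SA < Phi.
  rewrite /SA /Phi; case: (boolP (has (fun t : n.+1.-tuple 'I_N => uniq t && (i \notin t)) (index_enum _))) => hh.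
    by apply: ltr_sum => // t /andP [_ it]; apply: strict_step.
  have : a1 = 0 by rewrite /a1 big_hasC.
  by move=> a0; move: (mulr_gt0 M0 b1pos); rewrite -ha1 a0 ltxx.
have vu : v < u.
  have := @P_lt R p0 y n 0 y0 yp0.
  rewrite !mul0r; apply.
  by rewrite add0n /p0 mulrA mulr1 ler_pdivrMr // mul1r ler_nat ltnW.
have hF : F * b1 = 1 - v * a1 by rewrite [in RHS]T2' [v * a1 + _]addrC addrK.
have hU : n.+1%:R * u * b1 = 1 - u * a1 by rewrite [in RHS]T1' [u * a1 + _]addrC addrK.
have key : b1 * ((v * SA + F * SB) - (u * SA + n.+1%:R * u * SB)) = b1 * (u - v) * (Phi - SA).
  rewrite hPhi; transitivity (b1*(v-u)*SA + SB * (F*b1) - SB * (n.+1%:R*u*b1)); first by ring.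
  rewrite hF hU ha1; ring.
rewrite -subr_gt0 -(pmulr_rgt0 _ b1pos) key.
by apply: mulr_gt0; [apply: mulr_gt0 => //; rewrite subr_gt0 | rewrite subr_gt0].
Qed.
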